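(* Let $\mathbf{X}=\{X_n\}_{n\ge 0}$ be a real-valued integrable process adapted to the filtration $\{\mathcal{F}_n\}_{n\ge0}$, and suppose $\mathbf{X}$ satisfies (A1) and (A4). Then: (i) $X_n\,I\{N_T<\infty\}$ possesses a finite limit a.e. as $n\to\infty$; (ii) if in addition (A2) holds, then $X_n\,I\{N_T<\infty\}\to 0$ a.e.; (iii) a.e., $\limsup_n |X_n|\,I\{N_T=\infty\}\le \limsup_n |U_n|$; (iv) if in addition (A3) holds, then $\lim_n X_n\,I\{N_T=\infty\}=0$ a.e.
   Context: Let $(\Omega,\mathcal{F},P)$ be a probability space with filtration $\mathcal{F}_0\subset\mathcal{F}_1\subset\cdots\subset\mathcal{F}$, and let $\mathbf{X}=\{X_n:n\ge0\}$ be an adapted process with $E|X_n|<\infty$ for all $n$. Residuals: $\epsilon_n=X_n-E[X_n\mid\mathcal{F}_{n-1}]$, $n\ge1$; partial sums $M_{s,t}=\sum_{i=s}^t\epsilon_i$ for $t\ge s\ge1$. $U_n=E[X_n\mid\mathcal{F}_{n-1}]\,I\{X_{n-1}=0\}$, $n\ge1$. Events: $D^+_n=\{X_n>0\}$, $D^-_n=\{X_n<0\}$, $D^0_n=\{X_n=0\}$ for $n\ge0$, and for $n\ge1$, $D_n=D^+_n(D^+_{n-1})^c\cup D^-_n(D^-_{n-1})^c\cup D^0_n(D^0_{n-1})^c$ (a ''crossing'' at time $n$). For $j\ge1$ define $T_j=\inf\{t\ge1:\sum_{i=1}^t I\{D_i\}\ge j\}$ (with $\inf\emptyset=\infty$),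 and $N_T=\sup\{j\ge1:T_j<\infty\}$ (with $N_T=0$ if $T_1=\infty$). Assumptions: (A1) There are constants $\alpha_n\ge0$ with $\sum_n\alpha_n<\infty$ such that a.e., for all $n\ge1$: $0\le \frac{E[X_n\mid\mathcal{F}_{n-1}]}{X_{n-1}}I\{X_{n-1}\ne0\}\le 1+\alpha_n$. (A2) There are constants $0\le k_n\le1$ with $\sum_n(1-k_n)=\infty$ such that a.e., for all $n\ge1$: $0\le \frac{E[X_n\mid\mathcal{F}_{n-1}]}{X_{n-1}}I\{X_{n-1}\ne0\}\le k_n$. (A3) $\lim_n U_n=0$ a.e. (A4) $M_{1,n}$ possesses a finite limit a.e. as $n\to\infty$. *)

(* Defs.v *)
From HB Require Import structures.
From mathcomp Require Import all_boot all_order all_algebra.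
From mathcomp Require Import all_classical all_reals all_analysis.
Set Implicit Arguments. Unset Strict Implicit. Unset Printing Implicit Defensive.
Import Order.TTheory GRing.Theory Num.Theory.
Import numFieldNormedType.Exports.
Local Open Scope classical_set_scope.
Local Open Scope ring_scope.

Section Defs.
Context {d : measure_display} {T : measurableType d} {R : realType}.

Definition sub_sigma (G : set (set T)) : Prop :=
  sigma_algebra setT G /\ G `<=` measurable.

Definition filtration (F : nat -> set (set T)) : Prop :=
  (forall n, sub_sigma (F n)) /\ (forall n, F n `<=` F n.+1).

Definition G_measurable (G : set (set T)) (f : T -> R) : Prop :=
  forall B : set R, measurable B -> G (f @^-1` B).

Definition cond_exp_version (P : probability T R) (G : set (set T))
    (X Y : T -> R) : Prop :=
  G_measurable G Y /\ P.-integrable setT (EFin \o Y) /\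
  forall A, G A -> (\int[P]_(x in A) (Y x)%:E = \int[P]_(x in A) (X x)%:E)%E.

(* residuals eps_n = X_n - E[X_n | F_{n-1}], with Ec n a version of E[X_n|F_{n-1}] *)
Definition resid (X Ec : nat -> T -> R) (n : nat) (x : T) : R := X n x - Ec n x.

Definition Msum (X Ec : nat -> T -> R) (n : nat) (x : T) : R :=
  \sum_(1 <= i < n.+1) resid X Ec i x.

Definition Useq (X Ec : nat -> T -> R) (n : nat) (x : T) : R :=
  Ec n x * (X n.-1 x == 0)%:R.

Definition crossing (X : nat -> T -> R) (n : nat) (x : T) : bool :=
  [|| (0 < X n x) && ~~ (0 < X n.-1 x),
      (X n x < 0) && ~~ (X n.-1 x < 0) |
      (X n x == 0) && ~~ (X n.-1 x == 0)].

(* T_j(x) < oo : exists t >= 1 with sum_{i=1}^t I{D_i} >= j *)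
Definition Tj_finite (X : nat -> T -> R) (j : nat) (x : T) : Prop :=
  exists t : nat, (1 <= t)%N /\ (j <= \sum_(1 <= i < t.+1) crossing X i x)%N.

(* N_T(x) < oo : sup {j >= 1 : T_j(x) < oo} is finite (N_T = 0 if the set is empty) *)
Definition NT_finite (X : nat -> T -> R) (x : T) : Prop :=
  exists N : nat, forall j : nat, (1 <= j)%N -> Tj_finite X j x -> (j <= N)%N.

End Defs.

(* Main.v *)
Require Import Defs.
From HB Require Import structures.
From mathcomp Require Import all_boot all_order all_algebra.
From mathcomp Require Import all_classical all_reals all_analysis.
Import Order.TTheory GRing.Theory Num.Theory.
Import numFieldNormedType.Exports.
Local Open Scope classical_set_scope.
Local Open Scope ring_scope.
From mathcomp Require Import ring lra zify.



Lemma cvg_ev {R : realType} {u : nat -> R} (cu : cvgn u) {d : R} (d0 : 0 < d) :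
  exists N, forall n, (N <= n)%N -> `|limn u - u n| <= d.
Proof.
 move/cvgrPdist_le: cu => /(_ d d0) [N _ HN].
by exists N => n hn; apply: HN.
Qed.

Lemma cvgS {R : realType} (u : nat -> R) : cvgn u -> cvgn (fun n => u n.+1).
Proof.
move=> cu; apply/cvg_ex; exists (limn u).
have -> : (fun n => u n.+1) = [sequence u (n + 1)%N]_n.
  by apply/funext => n; rewrite /= addn1.
by rewrite cvg_shiftn.
Qed.

Lemma cvg_shift_ex {R : realType} (u : nat -> R) s :
  cvgn (fun k => u (k + s)%N) -> cvgn u.
Proof.
case/cvg_ex => l hl; apply/cvg_ex; exists l.
by rewrite -(cvg_shiftn s).
Qed.

Section Core.
Context {R : realType}.

Definition ee (x c : nat -> R) n := x n - c n.
Definition MM (x c : nat -> R) n := \sum_(1 <= i < n.+1) ee x c i.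
Definition crs (x : nat -> R) (n : nat) : bool :=
  [|| (0 < x n) && ~~ (0 < x n.-1),
      (x n < 0) && ~~ (x n.-1 < 0) |
      (x n == 0) && ~~ (x n.-1 == 0)].

Lemma MMS x c n : MM x c n.+1 = MM x c n + ee x c n.+1.
Proof. by rewrite /MM big_nat_recr. Qed.

Lemma alg1 (Q a A : R) : 0 <= Q -> 0 <= a -> 0 <= A -> A + a < 1 ->
  (1 + a) * (Q / (1 - A)) <= Q / (1 - (A + a)).
Proof.
move=> Q0 a0 A0 Aa1.
have d1 : 0 < 1 - A by lra.
have d2 : 0 < 1 - (A + a) by lra.
rewrite ler_pdivlMr // mulrC mulrA.
have -> : (1 - (A + a)) * ((1 + a) * Q / (1 - A)) =
   ((1 - (A + a)) * (1 + a)) * (Q / (1 - A)) by rewrite !mulrA.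
have h : (1 - (A + a)) * (1 + a) <= 1 - A by nra.
apply: (le_trans (ler_wpM2r _ h)); first by rewrite divr_ge0 // ltW.
by rewrite mulrC divfK // gt_eqF.
Qed.

Variables (x c a : nat -> R).
Hypothesis Ha : forall n, 0 <= a n.
Hypothesis H1 : forall n, (1 <= n)%N -> x n.-1 != 0 ->
  0 <= c n / x n.-1 <= 1 + a n.

Lemma stepP n : 0 < x n -> 0 <= c n.+1 <= (1 + a n.+1) * x n.
Proof.
move=> xp; have /andP[h1 h2] := @H1 n.+1 (ltn0Sn n) (lt0r_neq0 xp).
have hc : c n.+1 = c n.+1 / x n * x n by rewrite divfK // gt_eqF.
rewrite hc; apply/andP; split; [apply: mulr_ge0 | apply: ler_wpM2r] => //; exact: ltW.
Qed.

Lemma stepN n : x n < 0 -> c n.+1 <= 0.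
Proof.
move=> xp; have /andP[h1 h2] := @H1 n.+1 (ltn0Sn n) (ltr0_neq0 xp).
have hc : c n.+1 = c n.+1 / x n * x n by rewrite divfK // lt_eqF.
by rewrite hc mulr_ge0_le0 // ltW.
Qed.

Lemma run_bound s t (tau rho : R) :
  0 <= tau -> (forall n, (s <= n)%N -> `|MM x c n - MM x c s| <= tau) ->
  0 <= x s -> (forall n, (s <= n < t)%N -> 0 < x n) ->
  0 <= rho < 1 ->
  (forall n, (s <= n)%N -> series a n.+1 - series a s.+1 <= rho) ->
  forall n, (s <= n <= t)%N -> x n <= (x s + tau) / (1 - rho).
Proof.
move=> tau0 Htau xs0 Hpos /andP[rho0 rho1] Hrho.
have Q0 : 0 <= x s + tau by rewrite addr_ge0.
suff H : forall k, (s + k <= t)%N ->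
   0 <= series a (s + k).+1 - series a s.+1 /\
   x (s + k) - (MM x c (s + k) - MM x c s) + tau <=
     (x s + tau) / (1 - (series a (s + k).+1 - series a s.+1)).
  move=> n /andP[sn nt].
  have hk : (s + (n - s) <= t)%N by rewrite subnKC.
  have [A0 HA] := H (n - s)%N hk.
  rewrite subnKC // in A0 HA.
  have hD := Htau n sn.
  have hA := Hrho n sn.
  have e1 : x n <= x n - (MM x c n - MM x c s) + tau.
    have := ler_norm (MM x c n - MM x c s); lra.
  apply: (le_trans e1); apply: (le_trans HA).
  apply: ler_wpM2l => //.
  rewrite lef_pV2 ?posrE; lra.
elim=> [|k IH] hk.
  rewrite addn0 subrr subr0 divr1; split=> //.
  by rewrite subrr subr0.
rewrite addnS in hk *.
have [A0 HA] := IH (ltnW hk).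
set n := (s + k)%N in hk A0 HA *.
have xn : 0 < x n by apply: Hpos; rewrite hk leq_addr.
have /andP[c0 c1] := stepP n xn.
rewrite seriesSr.
set A := series a n.+1 - series a s.+1 in A0 HA *.
have eA : series a n.+1 + a n.+1 - series a s.+1 = A + a n.+1.
  by rewrite /A; lra.
rewrite eA.
have hrho := Hrho n.+1 (leqW (leq_addr _ _)).
rewrite seriesSr -/n eA in hrho.
have an := Ha n.+1.
split; first lra.
have hD := Htau n (leq_addr _ _).
have hD' := ler_norm (MM x c n - MM x c s).
rewrite MMS /ee.
apply: (le_trans _ (alg1 _ _ _ Q0 an A0 _)); last lra.
have h2 := ler_wpM2l (addr_ge0 ler01 an) HA.
apply: le_trans h2.
set D := MM x c n - MM x c s in hD hD' *.
have : a n.+1 * D <= a n.+1 * tau by apply: ler_wpM2l => //; lra.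
have -> : x n.+1 - (MM x c n + (x n.+1 - c n.+1) - MM x c s) = c n.+1 - D.
  by rewrite /D; lra.
clearbody D.
move: c1; rewrite !mulrDl !mulrDr !mul1r mulrN; lra.
Qed.


Lemma crs_step n : ~~ crs x n.+1 ->
  [/\ (0 < x n -> 0 < x n.+1), (x n < 0 -> x n.+1 < 0) & (x n = 0 -> x n.+1 = 0)].
Proof.
rewrite /crs /= !negb_or !negb_and !negbK => /and3P[h1 h2 h3].
split=> hx.
- case: (ltgtP (x n.+1) 0) => // h.
  + by move: h2; rewrite h /= => /(lt_trans hx); rewrite ltxx.
  + by move: h3; rewrite h eqxx /= => /eqP hh; move: hx; rewrite hh ltxx.
- case: (ltgtP (x n.+1) 0) => // h.
  + by move: h1; rewrite h /= => /(lt_trans hx); rewrite ltxx.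
  + by move: h3; rewrite h eqxx /= => /eqP hh; move: hx; rewrite hh ltxx.
- case: (ltgtP (x n.+1) 0) => // h.
  + by move: h2; rewrite h hx ltxx.
  + by move: h1; rewrite h hx ltxx.
Qed.

Lemma sign_persist m : (forall i, (m < i)%N -> ~~ crs x i) ->
  forall n, (m <= n)%N ->
  [/\ (0 < x m -> 0 < x n), (x m < 0 -> x n < 0) & (x m = 0 -> x n = 0)].
Proof.
move=> hc; elim=> [|n IH].
  by rewrite leqn0 => /eqP ->.
rewrite leq_eqVlt => /orP[/eqP <-|hn]; first by [].
have [i1 i2 i3] := IH hn.
have [j1 j2 j3] := crs_step n (hc n.+1 hn).
by split=> h; [apply: j1; apply: i1 | apply: j2; apply: i2 | apply: j3; apply: i3].
Qed.


Lemma sign_persist_loc m t : (forall i, (m < i <= t)%N -> ~~ crs x i) ->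
  forall n, (m <= n <= t)%N ->
  [/\ (0 < x m -> 0 < x n), (x m < 0 -> x n < 0) & (x m = 0 -> x n = 0)].
Proof.
move=> hc; elim=> [|n IH].
  by rewrite leqn0 => /andP[/eqP -> _].
move=> /andP[]; rewrite leq_eqVlt => /orP[/eqP <-|hn] hnt; first by [].
have [i1 i2 i3] := IH ltac:(by rewrite -ltnS hn (ltnW hnt)).
have [j1 j2 j3] := crs_step n (hc n.+1 ltac:(by rewrite hn hnt)).
by split=> h; [apply: j1; apply: i1 | apply: j2; apply: i2 | apply: j3; apply: i3].
Qed.

Lemma run_start n : 0 < x n.+1 -> x n <= 0 ->
  x n.+1 <= `|c n.+1 * (x n == 0)%:R| + `|ee x c n.+1|.
Proof.
move=> xp; rewrite le_eqVlt => /orP[/eqP x0|xn].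
  rewrite x0 eqxx mulr1 /ee.
  have := ler_norm (c n.+1); have := ler_norm (x n.+1 - c n.+1); lra.
have := stepN n xn; rewrite /ee.
have := ler_norm (x n.+1 - c n.+1); have := normr_ge0 (c n.+1 * (x n == 0)%:R); lra.
Qed.

Hypothesis Hsa : cvgn (series a).
Hypothesis HM : cvgn (MM x c).

Lemma sa_le n : series a n <= limn (series a).
Proof.
apply: nondecreasing_cvgn_le => //.
by apply: nondecreasing_series => k _ _; exact: Ha.
Qed.

Lemma sa_tail (d : R) : 0 < d -> exists N, forall s n, (N <= s)%N ->
  series a n - series a s <= d.
Proof.
move=> d0; have [N HN] := cvg_ev Hsa d0; exists N => s n hs.
have h1 := HN s hs; have h2 := sa_le n.
have h3 := ler_norm (limn (series a) - series a s); lra.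
Qed.

Lemma M_cauchy (d : R) : 0 < d -> exists N, forall s n, (N <= s)%N -> (N <= n)%N ->
  `|MM x c n - MM x c s| <= d.
Proof.
move=> d0; have d20 : 0 < d / 2 by lra.
have [N HN] := cvg_ev HM d20; exists N => s n hs hn.
have h1 := HN s hs; have h2 := HN n hn.
have -> : MM x c n - MM x c s = (limn (MM x c) - MM x c s) - (limn (MM x c) - MM x c n).
  by lra.
apply: (le_trans (ler_normB _ _)); lra.
Qed.

Lemma M_bound : exists B N, forall n, (N <= n)%N -> `|MM x c n| <= B.
Proof.
have [N HN] := cvg_ev HM ltr01; exists (`|limn (MM x c)| + 1), N => n hn.
have h := HN n hn.
have -> : MM x c n = limn (MM x c) - (limn (MM x c) - MM x c n) by lra.
apply: (le_trans (ler_normB _ _)); lra.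
Qed.

Lemma pos_bound m : (forall n, (m <= n)%N -> 0 < x n) ->
  exists s C, (m <= s)%N /\ forall n, (s <= n)%N -> x n <= C.
Proof.
move=> Hx.
have [N1 HN1] := M_cauchy 1 ltr01.
have [N2 HN2] := sa_tail (1/2) ltac:(lra).
set s := maxn m (maxn N1 N2).
have ms : (m <= s)%N by rewrite leq_maxl.
have N1s : (N1 <= s)%N by rewrite /s (leq_trans _ (leq_maxr _ _)) // leq_maxl.
have N2s : (N2 <= s)%N by rewrite /s (leq_trans _ (leq_maxr _ _)) // leq_maxr.
exists s, ((x s + 1) / (1 - 1/2)); split => // n hn.
apply: (run_bound s n 1 (1/2)) => //.
- by move=> k hk; apply: HN1 => //; apply: leq_trans hk.
- by apply/ltW/Hx.
- by move=> k /andP[hk _]; apply: Hx; apply: leq_trans hk.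
- by apply/andP; split; lra.
- by move=> k hk; apply: HN2; apply: leq_trans N2s _.
- by rewrite hn leqnn.
Qed.

Lemma noninc_from (u : nat -> R) s : (forall n, (s <= n)%N -> u n.+1 <= u n) ->
  forall n, (s <= n)%N -> u n <= u s.
Proof.
move=> h; elim=> [|n IH]; first by rewrite leqn0 => /eqP ->.
rewrite leq_eqVlt => /orP[/eqP <-|hn]; first by [].
exact: le_trans (h n hn) (IH hn).
Qed.

Lemma pos_cvg m : (forall n, (m <= n)%N -> 0 < x n) -> cvgn x.
Proof.
move=> Hx.
have [s [C [ms HC]]] := pos_bound m Hx.
have [B [N3 HB]] := M_bound.
set s' := maxn s N3.
have C0 : 0 <= C by apply: le_trans (HC s (leqnn _)); apply/ltW/Hx.
pose w n := x n - C * series a n.+1 - MM x c n.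
have step : forall n, (s <= n)%N -> w n.+1 <= w n.
  move=> n hn; rewrite /w seriesSr MMS /ee.
  have xn : 0 < x n by apply: Hx; apply: leq_trans hn.
  have /andP[_ c1] := stepP n xn.
  have h1 := ler_wpM2l (Ha n.+1) (HC n hn).
  move: c1; rewrite mulrDl mul1r mulrDr => c1.
  lra.
have lb : forall n, (s' <= n)%N -> - (C * limn (series a)) - B <= w n.
  move=> n hn.
  have xn : 0 < x n by apply: Hx; apply: leq_trans hn; apply: leq_trans (leq_maxl _ _).
  have h1 := ler_wpM2l C0 (sa_le n.+1).
  have h2 := HB n (leq_trans (leq_maxr _ _) hn).
  have h3 := ler_norm (MM x c n).
  rewrite /w; lra.
have cw : cvgn w.
  apply: (@cvg_shift_ex _ _ s'); apply: nonincreasing_is_cvgn.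
    apply/nonincreasing_seqP => k /=; rewrite addSn; apply: step.
    by apply: leq_trans (leq_addl _ _); apply: leq_maxl.
  by exists (- (C * limn (series a)) - B) => _ [k _ <-]; apply: lb; apply: leq_addl.
have -> : x = w + ((fun n => C) * (fun n => series a n.+1) + MM x c).
  apply/funext => n.
  change (x n = (x n - C * series a n.+1 - MM x c n) + (C * series a n.+1 + MM x c n)).
  lra.
apply: is_cvgD => //; apply: is_cvgD => //.
by apply: is_cvgM; [exact: is_cvg_cst | exact: cvgS].
Qed.

Lemma pos_zero m (k : nat -> R) : (forall n, 0 <= k n <= 1) ->
  series (fun n => 1 - k n) @ \oo --> +oo ->
  (forall n, (1 <= n)%N -> x n.-1 != 0 -> 0 <= c n / x n.-1 <= k n) ->
  (forall n, (m <= n)%N -> 0 < x n) -> x @ \oo --> 0.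
Proof.
move=> Hk Hks H2 Hx.
have cx := pos_cvg m Hx.
suff L0 : limn x = 0 by rewrite -L0; exact: cx.
have Lge : 0 <= limn x.
  by apply: limr_ge => //; exists m => // n /= hn; exact/ltW/Hx.
apply/eqP; rewrite eq_le Lge andbT leNgt; apply/negP => Lp.
have [N1 HN1] := cvg_ev cx (d := limn x / 2) ltac:(lra).
set s0 := maxn m N1.
have xs : forall n, (s0 <= n)%N -> limn x / 2 <= x n.
  move=> n hn; have h1 := HN1 n (leq_trans (leq_maxr _ _) hn).
  have h2 := ler_norm (limn x - x n); lra.
have stepK : forall n, 0 < x n -> c n.+1 <= k n.+1 * x n.
  move=> n xn; have /andP[h1 h2] := H2 n.+1 (ltn0Sn n) (lt0r_neq0 xn).
  have hc : c n.+1 = c n.+1 / x n * x n by rewrite divfK // gt_eqF.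
  by rewrite hc; apply: ler_wpM2r => //; exact: ltW.
pose v n := x n + (limn x / 2) * series (fun n => 1 - k n) n.+1 - MM x c n.
have vstep : forall n, (s0 <= n)%N -> v n.+1 <= v n.
  move=> n hn; rewrite /v seriesSr MMS /ee.
  have xn := xs n hn.
  have xp : 0 < x n by lra.
  have c1 := stepK n xp.
  have /andP[k0 k1] := Hk n.+1.
  have h : 0 <= (1 - k n.+1) * (x n - limn x / 2) by apply: mulr_ge0; lra.
  nra.
have vle := noninc_from v s0 vstep.
have [B [N3 HB]] := M_bound.
move/cvgryPgt: Hks => /(_ ((2 / limn x) * (v s0 + B))) [N4 _ HN4].
set n := maxn s0 (maxn N3 N4).
have h1 : x n + (limn x / 2) * series (fun n => 1 - k n) n.+1 - MM x c n <= v s0.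
  exact: vle n (leq_maxl _ _).
have h2 := HB n (leq_trans (leq_maxl _ _) (leq_maxr _ _)).
have h3 := HN4 n.+1 (leqW (leq_trans (leq_maxr _ _) (leq_maxr _ _))).
have h4 := ler_norm (MM x c n).
have xp : 0 < x n by apply: Hx; apply: leq_trans (leq_maxl _ _) (leq_maxl _ _).
have h5 : limn x / 2 * ((2 / limn x) * (v s0 + B)) <
          limn x / 2 * series (fun n => 1 - k n) n.+1.
  by rewrite ltr_pM2l //; lra.
have e : limn x / 2 * ((2 / limn x) * (v s0 + B)) = v s0 + B.
  by field; exact: lt0r_neq0.
rewrite e in h5; lra.
Qed.

Lemma pos_side (l eta : R) : 0 <= l -> 0 < eta ->
  (forall d, 0 < d -> exists N, forall n, (N <= n)%N ->
      `|c n * (x n.-1 == 0)%:R| <= l + d) ->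
  exists N, forall s n, (N <= s)%N -> (s <= n)%N -> crs x s ->
    (forall i, (s < i <= n)%N -> ~~ crs x i) -> 0 < x s -> x n <= l + eta.
Proof.
move=> l0 eta0 HU.
set eps := eta / (6 + 2 * l + 2 * eta).
have den0 : 0 < 6 + 2 * l + 2 * eta by lra.
have eps0 : 0 < eps by rewrite divr_gt0.
have epsE : eps * (6 + 2 * l + 2 * eta) = eta by rewrite /eps divfK // gt_eqF.
clearbody eps.
have eps12 : eps < 1/2 by nra.
have [Nc HNc] := M_cauchy eps eps0.
have [Na HNa] := sa_tail eps eps0.
have [Nu HNu] := HU eps eps0.
exists (maxn Nc (maxn Na Nu)).+1 => s n hs hsn hcr hnc xs.
case: s hs hsn hcr hnc xs => [//|s'] hs hsn hcr hnc xs.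
rewrite ltnS in hs.
have hc' : (Nc <= s')%N by apply: leq_trans hs; rewrite leq_maxl.
have ha' : (Na <= s')%N.
  by apply: leq_trans hs; rewrite (leq_trans _ (leq_maxr _ _)) // leq_maxl.
have hu' : (Nu <= s'.+1)%N.
  by apply: leqW; apply: leq_trans hs; rewrite (leq_trans _ (leq_maxr _ _)) // leq_maxr.
have xprev : x s' <= 0.
  move: hcr; rewrite /crs /= xs (lt_gtF xs) (gt_eqF xs) /= orbF.
  by rewrite leNgt.
have hxs := run_start s' xs xprev.
have he : `|ee x c s'.+1| <= eps.
  have -> : ee x c s'.+1 = MM x c s'.+1 - MM x c s' by rewrite MMS; lra.
  by apply: HNc => //; apply: leqW.
have hU := HNu s'.+1 hu'; rewrite /= in hU.
have hb := run_bound s'.+1 n eps eps (ltW eps0).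
have hb2 : x n <= (x s'.+1 + eps) / (1 - eps).
  apply: hb => //.
  - move=> k hk; apply: HNc => //; first exact: leqW.
    exact: leq_trans (leqW hc') hk.
  - exact: ltW.
  - move=> k /andP[hk1 hk2].
    have [p1 _ _] := sign_persist_loc s'.+1 n hnc k ltac:(by rewrite hk1 ltnW).
    exact: p1.
  - by apply/andP; split; lra.
  - move=> k hk; apply: HNa; apply: leqW; exact: leqW.
  - by rewrite hsn leqnn.
apply: (le_trans hb2).
rewrite ler_pdivrMr; last by lra.
nra.
Qed.

End Core.

Lemma last_cross {R : realType} (x : nat -> R) N : crs x N ->
  forall n, (N <= n)%N -> exists s, [/\ (N <= s)%N, (s <= n)%N, crs x s &
    forall j, (s < j <= n)%N -> ~~ crs x j].
Proof.
move=> hN; elim=> [|n IH].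
  rewrite leqn0 => /eqP hN0; subst N; exists 0%N; split => //.
  by move=> j /andP[h1 h2]; move: (leq_trans h1 h2).
rewrite leq_eqVlt => /orP[/eqP <-|hn].
  exists N; split => //; by move=> j /andP[h1 h2]; move: (leq_trans h1 h2); rewrite ltnn.
have [s [h1 h2 h3 h4]] := IH hn.
case hc : (crs x n.+1).
  exists n.+1; split => //; first exact: ltnW.
  by move=> j /andP[h5 h6]; move: (leq_trans h5 h6); rewrite ltnn.
exists s; split => //; first exact: leqW.
move=> j /andP[h5]; rewrite leq_eqVlt => /orP[/eqP ->|h6]; first by rewrite hc.
by apply: h4; rewrite h5.
Qed.

Lemma count_unbounded {R : realType} (x : nat -> R) :
  (forall m, exists i, (m < i)%N && crs x i) ->
  forall j, exists t, (1 <= t)%N /\ (j <= \sum_(1 <= i < t.+1) crs x i)%N.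
Proof.
move=> Hinf; elim=> [|j [t [ht IH]]]; first by exists 1%N.
have [i /andP[hi hci]] := Hinf t.
exists i; split; first exact: leq_trans ht (ltnW hi).
rewrite (@big_cat_nat _ _ _ t.+1) //=; last exact: ltnW.
rewrite [X in (_ + X)%N]big_nat_recr //= hci.
lia.
Qed.

Lemma ev_bounded {R : realType} (x : nat -> R) m :
  (forall i, (m < i)%N -> ~~ crs x i) ->
  forall t, (\sum_(1 <= i < t.+1) crs x i <= minn t m)%N.
Proof.
move=> h; elim=> [|t IH]; first by rewrite big_geq.
rewrite big_nat_recr //=.
case: (leqP t.+1 m) => ht.
  have : (crs x t.+1 <= 1)%N by case: (crs x t.+1).
  lia.
rewrite (negbTE (h _ ht)) addn0; lia.
Qed.

Lemma esup_le_ev {R : realType} (u : (\bar R)^nat) (r : \bar R) N :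
  (forall n, (N <= n)%N -> (u n <= r)%E) -> (limn_esup u <= r)%E.
Proof.
move=> h; rewrite /limn_esup limf_esupE.
apply: (@le_trans _ _ (ereal_sup (u @` [set n | (N <= n)%N]))).
  apply: ereal_inf_lbound; exists [set n | (N <= n)%N] => //; by exists N.
by apply: ge_ereal_sup => _ [n hn <-]; exact: h.
Qed.

Lemma esup_lt_ev {R : realType} (u : (\bar R)^nat) (r : R) :
  (limn_esup u < r%:E)%E -> exists N, forall n, (N <= n)%N -> (u n <= r%:E)%E.
Proof.
rewrite /limn_esup limf_esupE => /ereal_inf_lt [_ [V hV <-] hlt].
case: hV => N _ hN; exists N => n hn.
apply: le_trans (ltW hlt); apply: ereal_sup_ubound; exists n => //; exact: hN.
Qed.

Lemma esup_ge0 {R : realType} (u : (\bar R)^nat) :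
  (forall n, 0 <= u n)%E -> (0 <= limn_esup u)%E.
Proof.
move=> h; apply: limf_esup_ge0 => //.
Qed.

Section Path.
Context {R : realType}.
Variables (x c a : nat -> R).
Hypothesis Ha : forall n, 0 <= a n.
Hypothesis H1 : forall n, (1 <= n)%N -> x n.-1 != 0 ->
  0 <= c n / x n.-1 <= 1 + a n.
Hypothesis Hsa : cvgn (series a).
Hypothesis HM : cvgn (MM x c).

Let xn := fun n => - x n.
Let cn := fun n => - c n.

Let H1N : forall n, (1 <= n)%N -> xn n.-1 != 0 -> 0 <= cn n / xn n.-1 <= 1 + a n.
Proof. by move=> n hn; rewrite /xn /cn invrN mulrNN oppr_eq0; exact: H1. Qed.

Let HMN : cvgn (MM xn cn).
Proof.
have -> : MM xn cn = - MM x c.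
  apply/funext => n; rewrite /MM /ee /xn /cn.
  change (\sum_(1 <= i < n.+1) (- x i - - c i) = - \sum_(1 <= i < n.+1) (x i - c i)).
  rewrite -sumrN; apply: eq_bigr => i _; lra.
exact: is_cvgN.
Qed.

Let crsN i : crs xn i = crs x i.
Proof. by rewrite /crs /xn !oppr_gt0 !oppr_lt0 !oppr_eq0 orbCA. Qed.

Lemma path_fin m : (forall i, (m < i)%N -> ~~ crs x i) -> cvgn x.
Proof.
move=> hc; have sp := sign_persist x m hc.
case: (ltgtP (x m) 0) => hxm.
- have hcn : cvgn xn.
    apply: (pos_cvg xn cn a Ha H1N Hsa HMN m) => n hn.
    by have [_ p2 _] := sp n hn; rewrite /xn oppr_gt0; exact: p2.
  have -> : x = - xn by apply/funext => n; rewrite /xn /= opprK.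
  exact: is_cvgN.
- apply: (pos_cvg x c a Ha H1 Hsa HM m) => n hn.
  by have [p1 _ _] := sp n hn; exact: p1.
- apply/cvg_ex; exists 0; apply/cvgrPdist_le => e e0.
  exists m => // n /= hn; have [_ _ p3] := sp n hn.
  by rewrite p3 // subr0 normr0 ltW.
Qed.

Lemma path_fin0 m (k : nat -> R) : (forall n, 0 <= k n <= 1) ->
  series (fun n => 1 - k n) @ \oo --> +oo ->
  (forall n, (1 <= n)%N -> x n.-1 != 0 -> 0 <= c n / x n.-1 <= k n) ->
  (forall i, (m < i)%N -> ~~ crs x i) -> x @ \oo --> 0.
Proof.
move=> Hk Hks H2 hc; have sp := sign_persist x m hc.
case: (ltgtP (x m) 0) => hxm.
- have H2N : forall n, (1 <= n)%N -> xn n.-1 != 0 -> 0 <= cn n / xn n.-1 <= k n.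
    by move=> n hn; rewrite /xn /cn invrN mulrNN oppr_eq0; exact: H2.
  have h := pos_zero xn cn a Ha H1N Hsa HMN m k Hk Hks H2N.
  have {}h : xn @ \oo --> 0.
    apply: h => n hn.
    by have [_ p2 _] := sp n hn; rewrite /xn oppr_gt0; exact: p2.
  move/cvgrPdist_le : h => h; apply/cvgrPdist_le => e e0.
  move: (h e e0); apply: filterS => n; by rewrite /xn !sub0r !normrN.
- apply: (pos_zero x c a Ha H1 Hsa HM m k Hk Hks H2) => n hn.
  by have [p1 _ _] := sp n hn; exact: p1.
- apply/cvgrPdist_le => e e0.
  exists m => // n /= hn; have [_ _ p3] := sp n hn.
  by rewrite p3 // subr0 normr0 ltW.
Qed.

Lemma path_inf (l : R) : 0 <= l ->
  (forall d, 0 < d -> exists N, forall n, (N <= n)%N ->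
      `|c n * (x n.-1 == 0)%:R| <= l + d) ->
  (forall m, exists i, (m < i)%N && crs x i) ->
  forall eta, 0 < eta -> exists N, forall n, (N <= n)%N -> `|x n| <= l + eta.
Proof.
move=> l0 HU Hinf eta eta0.
have HUN : forall d, 0 < d -> exists N, forall n, (N <= n)%N ->
    `|cn n * (xn n.-1 == 0)%:R| <= l + d.
  move=> d d0; have [N hN] := HU d d0; exists N => n hn.
  by rewrite /cn /xn oppr_eq0 mulNr normrN; exact: hN.
have [N1 P1] := pos_side x c a Ha H1 Hsa HM l eta l0 eta0 HU.
have [N2 P2] := pos_side xn cn a Ha H1N Hsa HMN l eta l0 eta0 HUN.
have [i /andP[hi hci]] := Hinf (maxn N1 N2).
exists i => n hn.
have [s [hs hsn hcs hnc]] := last_cross x i hci n hn.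
have hN1 : (N1 <= s)%N by apply: leq_trans (leq_maxl N1 N2) (leq_trans (ltnW hi) hs).
have hN2 : (N2 <= s)%N by apply: leq_trans (leq_maxr N1 N2) (leq_trans (ltnW hi) hs).
have [p1 p2 p3] := sign_persist_loc x s n hnc n ltac:(by rewrite hsn leqnn).
case: (ltgtP (x s) 0) => hxs.
- have hxn := p2 hxs.
  have hnc' : forall j, (s < j <= n)%N -> ~~ crs xn j by move=> j hj; rewrite crsN; exact: hnc.
  have hcs' : crs xn s by rewrite crsN.
  have hxs' : 0 < xn s by rewrite /xn oppr_gt0.
  have := P2 s n hN2 hsn hcs' hnc' hxs'.
  by rewrite ltr0_norm.
- have hxn := p1 hxs.
  by rewrite gtr0_norm //; exact: (P1 s n hN1 hsn hcs hnc hxs).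
- by rewrite p3 // normr0; lra.
Qed.

End Path.

Lemma ev_of_NT {d : measure_display} {T : measurableType d} {R : realType}
  (X : nat -> T -> R) (w : T) : NT_finite X w ->
  exists m, forall i, (m < i)%N -> ~~ crs (fun n => X n w) i.
Proof.
move=> [N HN]; apply: contrapT => Hno.
have Hinf : forall m, exists i, (m < i)%N && crs (fun n => X n w) i.
  move=> m; apply: contrapT => hm; apply: Hno; exists m => i hi.
  apply/negP => hc; apply: hm; exists i; by rewrite hi hc.
have [t [ht hs]] := count_unbounded _ Hinf N.+1.
have := HN N.+1 isT (ex_intro _ t (conj ht hs)).
by rewrite ltnn.
Qed.

Lemma inf_of_notNT {d : measure_display} {T : measurableType d} {R : realType}
  (X : nat -> T -> R) (w : T) : ~ NT_finite X w ->
  forall m, exists i, (m < i)%N && crs (fun n => X n w) i.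
Proof.
move=> hN m; apply: contrapT => hm; apply: hN.
have hno : forall i, (m < i)%N -> ~~ crs (fun n => X n w) i.
  move=> i hi; apply/negP => hc; apply: hm; exists i; by rewrite hi hc.
exists m => j hj [t [ht hs]].
apply: (leq_trans hs); apply: (leq_trans (ev_bounded (fun n => X n w) m hno t)).
exact: geq_minr.
Qed.

Theorem theorem1 (d : measure_display) (T : measurableType d) (R : realType)
  (P : probability T R) (F : nat -> set (set T)) (X Ec : nat -> T -> R)
  (alpha : nat -> R) :
  filtration F ->
  (forall n, G_measurable (F n) (X n)) ->
  (forall n, P.-integrable setT (EFin \o X n)) ->
  (forall n, (1 <= n)%N -> cond_exp_version P (F n.-1) (X n) (Ec n)) ->
  (* (A1) *)
  (forall n, 0 <= alpha n) -> cvgn (series alpha) ->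
  {ae P, forall x, forall n, (1 <= n)%N -> X n.-1 x != 0 ->
      0 <= Ec n x / X n.-1 x <= 1 + alpha n} ->
  (* (A4) *)
  {ae P, forall x, cvgn (fun n => Msum X Ec n x)} ->
  [/\
   (* (i) *)
   {ae P, forall x,
      cvgn (fun n => X n x * \1_[set y | NT_finite X y] x)},
   (* (ii) *)
   (forall k : nat -> R, (forall n, 0 <= k n <= 1) ->
      series (fun n => 1 - k n) @ \oo --> +oo ->
      {ae P, forall x, forall n, (1 <= n)%N -> X n.-1 x != 0 ->
          0 <= Ec n x / X n.-1 x <= k n} ->
      {ae P, forall x,
         (fun n => X n x * \1_[set y | NT_finite X y] x) @ \oo --> 0}),
   (* (iii) *)
   {ae P, forall x,
      (limn_esup (fun n => (`|X n x| * \1_[set y | ~ NT_finite X y] x)%:E)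
        <= limn_esup (fun n => (`|Useq X Ec n x|)%:E))%E} &
   (* (iv) *)
   ({ae P, forall x, (fun n => Useq X Ec n x) @ \oo --> 0} ->
    {ae P, forall x,
       (fun n => X n x * \1_[set y | ~ NT_finite X y] x) @ \oo --> 0})].
Proof.
move=> hF hXm hXi hEc ha0 hsa hA1 hA4.
split.
- move: hA1 hA4; apply: filterS2 => w h1 h4.
  pose x := fun n => X n w; pose c := fun n => Ec n w.
  have HM : cvgn (MM x c) := h4.
  have [hN|hN] := pselect (NT_finite X w).
  + have [m hm] := ev_of_NT X w hN.
    have -> : (fun n => X n w * \1_[set y | NT_finite X y] w) = x.
      by apply/funext => n; rewrite indicE mem_set // mulr1.
    exact: (path_fin x c alpha ha0 h1 hsa HM m hm).
  + have -> : (fun n => X n w * \1_[set y | NT_finite X y] w) = (fun _ => 0).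
      by apply/funext => n; rewrite indicE memNset // mulr0.
    exact: is_cvg_cst.
- move=> k hk hks hA2; move: hA1 hA4 hA2; apply: filterS3 => w h1 h4 h2.
  pose x := fun n => X n w; pose c := fun n => Ec n w.
  have HM : cvgn (MM x c) := h4.
  have [hN|hN] := pselect (NT_finite X w).
  + have [m hm] := ev_of_NT X w hN.
    have -> : (fun n => X n w * \1_[set y | NT_finite X y] w) = x.
      by apply/funext => n; rewrite indicE mem_set // mulr1.
    exact: (path_fin0 x c alpha ha0 h1 hsa HM m k hk hks h2 hm).
  + have -> : (fun n => X n w * \1_[set y | NT_finite X y] w) = (fun _ => 0).
      by apply/funext => n; rewrite indicE memNset // mulr0.
    exact: cvg_cst.
- move: hA1 hA4; apply: filterS2 => w h1 h4.
  pose x := fun n => X n w; pose c := fun n => Ec n w.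
  have HM : cvgn (MM x c) := h4.
  set v := (fun n => (`|Useq X Ec n w|)%:E).
  have v0 : (0 <= limn_esup v)%E by apply: esup_ge0 => n; rewrite /v lee_fin.
  have [hN|hN] := pselect (NT_finite X w).
  + have -> : (fun n => (`|X n w| * \1_[set y | ~ NT_finite X y] w)%:E) = (fun _ => 0%E).
      by apply/funext => n; rewrite indicE memNset ?mulr0 //=; apply.
    apply: le_trans v0.
    by apply: (esup_le_ev _ _ 0%N) => n _.
  + have -> : (fun n => (`|X n w| * \1_[set y | ~ NT_finite X y] w)%:E) =
              (fun n => (`|x n|)%:E).
      by apply/funext => n; rewrite indicE mem_set // mulr1.
    have Hinf := inf_of_notNT X w hN.
    move: v0; case E: (limn_esup v) => [l| |] v0; [|by rewrite leey|by []].
    have l0 : 0 <= l by rewrite -lee_fin.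
    have HU : forall d, 0 < d -> exists N, forall n, (N <= n)%N ->
        `|c n * (x n.-1 == 0)%:R| <= l + d.
      move=> dd d0; have : (limn_esup v < (l + dd)%:E)%E by rewrite E lte_fin; lra.
      move=> /esup_lt_ev [N hN']; exists N => n hn.
      by have := hN' n hn; rewrite /v lee_fin.
    apply/lee_addgt0Pr => eta eta0.
    have [N hN'] := path_inf x c alpha ha0 h1 hsa HM l l0 HU Hinf eta eta0.
    apply: (esup_le_ev _ _ N) => n hn; rewrite -EFinD lee_fin; exact: hN' n hn.
- move=> hU; move: hA1 hA4 hU; apply: filterS3 => w h1 h4 hu.
  pose x := fun n => X n w; pose c := fun n => Ec n w.
  have HM : cvgn (MM x c) := h4.
  have [hN|hN] := pselect (NT_finite X w).
  + have -> : (fun n => X n w * \1_[set y | ~ NT_finite X y] w) = (fun _ => 0).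
      by apply/funext => n; rewrite indicE memNset ?mulr0 //=; apply.
    exact: cvg_cst.
  + have -> : (fun n => X n w * \1_[set y | ~ NT_finite X y] w) = x.
      by apply/funext => n; rewrite indicE mem_set // mulr1.
    have Hinf := inf_of_notNT X w hN.
    have HU : forall d, 0 < d -> exists N, forall n, (N <= n)%N ->
        `|c n * (x n.-1 == 0)%:R| <= 0 + d.
      move=> dd d0; move/cvgrPdist_le : hu => /(_ dd d0) [N _ hN'].
      exists N => n hn; have := hN' n hn; by rewrite sub0r normrN add0r.
    apply/cvgrPdist_le => e e0.
    have [N hN'] := path_inf x c alpha ha0 h1 hsa HM 0 (lexx 0) HU Hinf e e0.
    exists N => // n /= hn; rewrite sub0r normrN; have := hN' n hn; by rewrite add0r.
Qed.
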